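(* Let $X$ be a non-trivial separated locally convex space with topology $\sigma(X,X^* )$, let $T$ be an arbitrary index set and let $f,g,h_t:X\to\overline{\mathbb{R}}$ ($t\in T$) be proper convex functions. Let $A=\{x\in X: h_t(x)\le 0\ \text{for all } t\in T\}$ and consider the primal problem $$(P)\qquad \inf_{x\in A}\{f(x)-g(x)\}$$ and the dual problem $$(\overline{D}_L)\qquad \sup_{\lambda\in\mathbb{R}^{(T)}_+}\ \inf_{(u^*,v^*,\gamma)\in W}\{g^c(u^*,v^*,\gamma)-(f+\lambda h)^c(u^*,v^*,\gamma)\}.$$ Suppose that $g$ has a proper e-convex minorant. If $(P)$ is solvable and there exists an optimal solution $x_0$ of $(P)$ at which $g$ is e-convex (i.e. $g(x_0)=g^{cc'}(x_0)$), then weak duality holds for $(P)$–$(\overline{D}_L)$, i.e. $v(P)\ge v(\overline{D}_L)$.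
   Context: $X^*$ is the topological dual of $X$, $\langle x,x^*\rangle$ the pairing, and $W:=X^*\times X^*\times\mathbb{R}$. The coupling function $c:X\times W\to\overline{\mathbb{R}}$ is $c(x,(x^*,y^*,\alpha))=\langle x,x^*\rangle$ if $\langle x,y^*\rangle<\alpha$ and $+\infty$ otherwise; $c':W\times X\to\overline{\mathbb{R}}$ is $c'((x^*,y^*,\alpha),x):=c(x,(x^*,y^*,\alpha))$. For $\varphi:X\to\overline{\mathbb{R}}$, $\varphi^c(w):=\sup_{x\in X}\{c(x,w)-\varphi(x)\}$ ($w\in W$); for $\psi:W\to\overline{\mathbb{R}}$, $\psi^{c'}(x):=\sup_{w\in W}\{c'(w,x)-\psi(w)\}$; $g^{cc'}:=(g^c)^{c'}$. In these expressions and in the dual objective the convention $(+\infty)+(-\infty)=(-\infty)+(+\infty)=(+\infty)-(+\infty)=(-\infty)-(-\infty)=-\infty$ is used. A set $C\subseteq X$ is e-convex if for every $x_0\notin C$ there is $x^*\in X^*$ with $\langle x-x_0,x^*\rangle<0$ for all $x\in C$; a function $X\to\overline{\mathbb{R}}$ is e-convex if its epigraph is an e-convex set. $\mathbb{R}^{(T)}_+$ is the set of families $\lambda=(\lambda_t)_{t\in T}$ with $\lambda_t\ge0$ and only finitely many $\lambda_t\neq0$, and $\lambda h:=\sum_{t:\lambda_t\ne0}\lambda_t h_t$. By convention $f(x)-g(x)=+\infty$ whenever $x\notin\operatorname{dom} f$. $v(\cdot)$ denotes the optimal value of a problem; $(P)$ is solvable if its infimum is attained. *)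

(* Defs.v *)
From HB Require Import structures.
From mathcomp Require Import all_boot all_order all_algebra.
From mathcomp Require Import all_classical all_reals ereal.
Set Implicit Arguments. Unset Strict Implicit. Unset Printing Implicit Defensive.
Import Order.TTheory GRing.Theory Num.Theory.
Local Open Scope ring_scope.
Local Open Scope classical_set_scope.
Local Open Scope ereal_scope.

(* Equipping X with
   sigma(X,Xs) makes it a separated locally convex space whose topological
   dual is (identified with) Xs; conversely every separated lcs with its
   weak topology sigma(X,X^* ) arises this way. *)
Definition dual_pair (R : realType) (X Xs : lmodType R) (pair : X -> Xs -> R) :=
  [/\ (forall (a : R) (x y : X) (xs : Xs),
          pair (a *: x + y)%R xs = (a * pair x xs + pair y xs)%R),
      (forall (a : R) (x : X) (xs ys : Xs),
          pair x (a *: xs + ys)%R = (a * pair x xs + pair x ys)%R),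
      (forall x : X, (forall xs, pair x xs = 0%R) -> x = 0%R) &
      (forall xs : Xs, (forall x, pair x xs = 0%R) -> xs = 0%R)].

Section Defs.
Variables (R : realType) (X Xs : lmodType R) (pair : X -> Xs -> R).

Definition W := (Xs * Xs * R)%type.

Definition cpl (x : X) (w : W) : \bar R :=
  let: (xs, ys, al) := w in
  if (pair x ys < al)%R then (pair x xs)%:E else +oo.
Definition cpl' (w : W) (x : X) : \bar R := cpl x w.

(* mathcomp's extended-real addition already follows the convention
   (+oo) + (-oo) = (-oo) + (+oo) = -oo, hence (+oo)-(+oo) = (-oo)-(-oo) = -oo. *)
Definition cconj (phi : X -> \bar R) (w : W) : \bar R :=
  ereal_sup [set cpl x w - phi x | x in [set: X]].
Definition cconj' (psi : W -> \bar R) (x : X) : \bar R :=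
  ereal_sup [set cpl' w x - psi w | w in [set: W]].
Definition cbiconj (g : X -> \bar R) : X -> \bar R := cconj' (cconj g).

(* e-convexity of a function (of its epigraph in X x R, whose dual is Xs x R):
   every point (x0,r0) outside epi g is strictly separated in the above sense. *)
Definition e_convex_fun (g : X -> \bar R) :=
  forall (x0 : X) (r0 : R), ~ (g x0 <= r0%:E) ->
    exists (xs : Xs) (be : R), forall (x : X) (r : R), g x <= r%:E ->
      (pair (x - x0)%R xs + (r - r0) * be < 0)%R.
End Defs.

Section Fun.
Variables (R : realType) (X : lmodType R).

Definition proper_fun (f : X -> \bar R) :=
  (forall x, -oo < f x) /\ (exists x, f x < +oo).

(* convexity = convexity of the epigraph {(x,r) | f x <= r} in X x R *)
Definition convex_fun (f : X -> \bar R) :=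
  forall (x y : X) (r s t : R), f x <= r%:E -> f y <= s%:E ->
    (0 <= t <= 1)%R ->
    f (t *: x + (1 - t) *: y)%R <= (t * r + (1 - t) * s)%:E.

Definition efdom (f : X -> \bar R) := [set x | f x < +oo].

Definition dcdiff (f g : X -> \bar R) (x : X) : \bar R :=
  if f x < +oo then f x - g x else +oo.

Definition Lambda (T : choiceType) : set (T -> R) :=
  [set l | (forall t, (0 <= l t)%R) /\ finite_set [set t | l t != 0%R]].

Definition f_plus_lh (T : choiceType) (f : X -> \bar R) (h : T -> X -> \bar R)
    (l : T -> R) (x : X) : \bar R :=
  f x + \sum_(t \in [set t | l t != 0%R]) ((l t)%:E * h t x).
End Fun.

(* Main.v *)
Require Import Defs.
From HB Require Import structures.
From mathcomp Require Import all_boot all_order all_algebra.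
From mathcomp Require Import all_classical all_reals ereal.
From mathcomp Require Import lra.
Import Order.TTheory GRing.Theory Num.Theory.
Local Open Scope ring_scope.
Local Open Scope classical_set_scope.
Local Open Scope ereal_scope.
Lemma pw (R : realType) (c G F : \bar R) (a : R) : -oo < c -> c - a%:E <= F ->
  c - G <= a%:E - (G - F).
Proof.
case: c => [c| |] //; case: G => [G| |]; case: F => [F| |] //=; rewrite ?lee_fin ?leey ?leNye //=.
all: try lra.
Qed.

Lemma fin_step (R : realType) (I S : \bar R) (a : R) : S <= a%:E - I -> I <= a%:E - S.
Proof.
case: I => [I| |]; case: S => [S| |] //=; rewrite ?lee_fin ?leey ?leNye //=; lra.
Qed.

Theorem proposition4p1 (R : realType) (X Xs : lmodType R)
  (pair : X -> Xs -> R) (T : choiceType)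
  (f g : X -> \bar R) (h : T -> X -> \bar R) :
  dual_pair pair ->
  (exists x : X, x != 0%R) ->
  proper_fun f -> convex_fun f ->
  proper_fun g -> convex_fun g ->
  (forall t, proper_fun (h t) /\ convex_fun (h t)) ->
  let A := [set x | forall t, h t x <= 0%E] in
  let vP := ereal_inf [set dcdiff f g x | x in A] in
  let vD := ereal_sup [set ereal_inf
                [set cconj pair g w - cconj pair (f_plus_lh f h l) w
                | w in [set: W Xs]]
             | l in @Lambda R T] in
  (exists m : X -> \bar R,
      proper_fun m /\ e_convex_fun pair m /\ (forall x, m x <= g x)) ->
  (exists x0, A x0 /\ dcdiff f g x0 = vP /\ g x0 = cbiconj pair g x0) ->
  vD <= vP.
Proof.
move=> _ _ [fNy _] _ _ _ hP A vP vD _ [x0 [Ax0 [<- gx0]]].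
rewrite /vD; apply: ge_ereal_sup => _ [l [l0 _] <-].
rewrite /dcdiff; case: ifPn => fx0; last by rewrite leey.
set a := f_plus_lh f h l x0.
have af : a <= f x0.
  rewrite /a /f_plus_lh -[leRHS]adde0; apply: leeD => //.
  apply: fsume_le0 => t _.
  by apply: mule_ge0_le0; [rewrite lee_fin; exact: l0 | exact: Ax0].
set I := ereal_inf _.
have Fge : forall w, cpl pair x0 w - a <= cconj pair (f_plus_lh f h l) w.
  by move=> w; apply: ereal_sup_ubound; exists x0.
have cgt : forall w, -oo < cpl pair x0 w.
  by move=> [[xs ys] al]; rewrite /cpl; case: ifP; rewrite ?ltNyr.
have Ile : forall w, I <= cconj pair g w - cconj pair (f_plus_lh f h l) w.
  by move=> w; apply: ereal_inf_lbound; exists w.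
apply: (@le_trans _ _ (a - g x0)); last exact: leeD af (lexx _).
have : a < +oo by apply: le_lt_trans fx0.
case aE : a => [ar| |] // _.
- rewrite gx0; apply: fin_step; rewrite /cbiconj /cconj'; apply: ge_ereal_sup => _ [w _ <-].
  rewrite /cpl'; have := Fge w; rewrite aE => /(@pw R _ (cconj pair g w) _ _ (cgt w)) H.
  by apply: le_trans H _; apply: leeB => //; exact: Ile.
- have := Ile (0%R, 0%R, 0%R); have := Fge (0%R, 0%R, 0%R); rewrite aE.
  have := cgt (0%R, 0%R, 0%R).
  case: (cpl pair x0 _) => [c| |] //= _; rewrite ?leye_eq => /eqP ->; rewrite addeNy ?leeNy_eq => /eqP -> //.
Qed.
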